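(* Let $0<p<\infty$, $0<\alpha<\infty$, and let $\beta$ be a real number with $\beta p<-1$ such that $\nu:=-(\alpha+\beta+\frac1p)>0$. Let $K>1$ be sufficiently large, $\delta_n=K^{-n}$, $f_n(z)=\delta_n^\nu(1+\delta_n-z)^\beta$ for $z\in\mathbb{D}$, $n\ge1$, and $F(z)=\sum_{n=1}^\infty|f_n(z)|$. Then there is a constant $C$ such that $(1-r)^\alpha M_p(r,F)\le C$ for every $r\in[0,1)$.
   Context: $\mathbb{D}$ is the unit disk; $(1+\delta_n-z)^\beta$ uses the principal branch (note $\mathrm{Re}(1+\delta_n-z)>0$ on $\mathbb{D}$). For a function $F$ on $\mathbb{D}$, $M_p(r,F)=\left(\int_0^{2\pi}|F(re^{i\theta})|^p\frac{d\theta}{2\pi}\right)^{1/p}$. *)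

(* Defs.v *)
From HB Require Import structures.
From mathcomp Require Import all_boot all_order all_algebra.
From mathcomp Require Import all_classical all_reals all_analysis.
From mathcomp Require Import complex.
Set Implicit Arguments. Unset Strict Implicit. Unset Printing Implicit Defensive.
Import Order.TTheory GRing.Theory Num.Theory.
Import numFieldNormedType.Exports.
Local Open Scope classical_set_scope.
Local Open Scope ring_scope.
Local Open Scope complex_scope.

Section Defs.
Context {R : realType}.

Definition reC (w : R[i]) : R := let: a +i* _ := w in a.
Definition imC (w : R[i]) : R := let: _ +i* b := w in b.

Definition cabs (w : R[i]) : R := Num.sqrt (reC w ^+ 2 + imC w ^+ 2).

(* principal argument, with values in (-pi, pi] (and 0 at 0) *)
Definition carg (w : R[i]) : R :=
  let x := reC w in let y := imC w in
  if 0 < x then atan (y / x)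
  else if x < 0 then (if 0 <= y then atan (y / x) + pi else atan (y / x) - pi)
  else if 0 < y then pi / 2 else if y < 0 then - (pi / 2) else 0.

Definition cexp (w : R[i]) : R[i] :=
  (expR (reC w))%:C * (cos (imC w) +i* sin (imC w)).

Definition cLog (w : R[i]) : R[i] := ln (cabs w) +i* carg w.

Definition cpow (w : R[i]) (b : R) : R[i] := cexp (b%:C * cLog w).

Definition delta (K : R) (n : nat) : R := K ^- n.

Definition fn (K nu beta : R) (n : nat) (z : R[i]) : R[i] :=
  ((delta K n) `^ nu)%:C * cpow (1 + (delta K n)%:C - z) beta.

Definition Fsum (K nu beta : R) (z : R[i]) : \bar R :=
  (\sum_(1 <= n <oo) (cabs (fn K nu beta n z))%:E)%E.

Definition polar (r t : R) : R[i] := (r * cos t) +i* (r * sin t).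

Definition Mp (p r : R) (F : R[i] -> \bar R) : \bar R :=
  poweR ((((pi *+ 2)^-1)%:E *
     \int[@lebesgue_measure R]_(t in `[0%R, (pi *+ 2)%R]) poweR (F (polar r t)) p))%E
   (p^-1).

End Defs.

(* Main.v *)
Require Import Defs.
From HB Require Import structures.
From mathcomp Require Import all_boot all_order all_algebra.
From mathcomp Require Import all_classical all_reals all_analysis.
From mathcomp Require Import complex.
From mathcomp Require Import ring lra.
Import Order.TTheory GRing.Theory Num.Theory.
Import numFieldNormedType.Exports.
Local Open Scope ring_scope.
Local Open Scope classical_set_scope.

Ltac clr := repeat match goal with H := _ |- _ => clearbody H end.
Ltac lra' := clr; lra.
Ltac nra' := clr; nra.

Lemma my_le_integral d (T : measurableType d) (R : realType)
  (mu : {measure set T -> \bar R}) (D : set T) (f g : T -> \bar R) :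
  (forall x, D x -> (0 <= f x)%E) -> (forall x, D x -> (f x <= g x)%E) ->
  (\int[mu]_(x in D) f x <= \int[mu]_(x in D) g x)%E.
Proof.
move=> f0 fg.
rewrite (integral_mkcond D f) (integral_mkcond D g).
have f0' : forall x, (0 <= (f \_ D) x)%E.
  by move=> x; rewrite /patch; case: ifPn => // /[1!inE] /f0.
have g0' : forall x, (0 <= (g \_ D) x)%E.
  by move=> x; rewrite /patch; case: ifPn => // /[1!inE] Dx; rewrite (le_trans (f0 _ Dx)) ?fg.
rewrite !ge0_integralTE //.
apply: ereal_sup_le => _ [h hf <-]; exists h => // x.
apply: (le_trans (hf x)); rewrite /patch; case: ifPn => // /[1!inE] Dx; exact: fg.
Qed.

Section A.
Variable R : realType.
Local Open Scope complex_scope.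
Lemma cabs_fn (K nu beta : R) n r t :
  cabs (fn K nu beta n (polar r t)) = delta K n `^ nu *
   expR (beta * ln (Num.sqrt ((1 + delta K n - r * cos t) ^+ 2 + (r * sin t) ^+ 2))).
Proof.
rewrite /fn /cpow /cexp /cLog /polar /=.
rewrite /cabs /=.
set c := carg _.
rewrite !mul0r !subr0 !addr0 !add0r sqrrN.
set E := expR _. set X := beta * c.
have -> : forall a b : R, (a * (b * cos X)) ^+ 2 + (a * (b * sin X)) ^+ 2 = (a * b) ^+ 2.
  by move=> a b; rewrite !exprMn -!mulrDr cos2Dsin2 mulr1.
by rewrite sqrtr_sqr ger0_norm // mulr_ge0 ?powR_ge0 ?expR_ge0.
Qed.
End A.

Section S3.
Variable R : realType.


Lemma is_derive_comp1 (f g : R -> R) (x df dg : R) :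
  is_derive x 1 f df -> is_derive (f x) 1 g dg -> is_derive x 1 (g \o f) (dg * df).
Proof.
move=> hf hg.
have df1 : derivable f x 1 by exact: ex_derive.
have dg1 : derivable g (f x) 1 by exact: ex_derive.
have dgf : derivable (g \o f) x 1.
  apply/derivable1_diffP; apply: differentiable_comp; exact/derivable1_diffP.
apply: DeriveDef => //.
by rewrite -derive1E derive1_comp // !derive1E !derive_val.
Qed.

Lemma is_derive_powD (c a x : R) : 0 < c + x ->
  is_derive x 1 (fun t => (c + t) `^ a) (a * (c + x) `^ (a - 1)).
Proof.
move=> h.
have := @is_derive_comp1 (fun t => c + t) (fun y : R => y `^ a) x 1 (a * (c + x) `^ (a - 1)).
rewrite mulr1; apply.
  have H := is_deriveD (is_derive_cst c x 1) (is_derive_id x 1).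
  by rewrite add0r in H.
exact: is_derive1_powR.
Qed.

Lemma is_derive_powB (c a x : R) : 0 < c - x ->
  is_derive x 1 (fun t => (c - t) `^ a) (- (a * (c - x) `^ (a - 1))).
Proof.
move=> h.
have := @is_derive_comp1 (fun t => c - t) (fun y : R => y `^ a) x (-1) (a * (c - x) `^ (a - 1)).
rewrite mulrN1; apply.
  have H := is_deriveB (is_derive_cst c x 1) (is_derive_id x 1).
  by rewrite sub0r in H.
exact: is_derive1_powR.
Qed.


Lemma int_pow_eq (A s g : R) : 0 < s -> 1 < g ->
  (\int[@lebesgue_measure R]_(t in `[0%R, (pi *+ 2)%R])
     (A * ((s + t) `^ (- g) + (s + pi *+ 2 - t) `^ (- g)))%:E =
   (((A / (g - 1)) * ((s + pi *+ 2 - pi *+ 2) `^ (1 - g) - (s + pi *+ 2) `^ (1 - g))) -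
    ((A / (g - 1)) * ((s + pi *+ 2 - 0) `^ (1 - g) - (s + 0) `^ (1 - g))))%:E)%E.
Proof.
move=> s0 g1.
set c := s + pi *+ 2.
pose F := (A / (g - 1)) \*: ((fun t : R => (c - t) `^ (1 - g)) - (fun t : R => (s + t) `^ (1 - g))).
pose f := fun t : R => A * ((s + t) `^ (- g) + (c - t) `^ (- g)).
have pi2 : 0 < pi *+ 2 :> R by rewrite mulrn_wgt0 // pi_gt0.
have dF : forall x, 0 <= x <= pi *+ 2 -> is_derive x 1 F (f x).
  move=> x /andP[x0 x2].
  have h1 : 0 < c - x by rewrite /c; lra.
  have h2 : 0 < s + x by lra.
  have H := is_deriveZ (A / (g - 1)) (is_deriveB (@is_derive_powB c (1 - g) x h1) (@is_derive_powD s (1 - g) x h2)).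
  have -> : f x = (A / (g - 1)) *: (- ((1 - g) * (c - x) `^ (1 - g - 1)) - (1 - g) * (s + x) `^ (1 - g - 1)).
    have e : 1 - g - 1 = - g by ring.
    rewrite /f /= e.
    set A' := (c - x) `^ (- g); set B' := (s + x) `^ (- g).
    have -> : - ((1 - g) * A') - (1 - g) * B' = (g - 1) * (A' + B') by ring.
    have gn : g - 1 != 0 by rewrite subr_eq0 gt_eqF.
    rewrite /GRing.scale /=.
    by field.
  exact: H.
have dfd : forall x, 0 <= x <= pi *+ 2 -> derivable F x 1.
  by move=> x hx; have H := dF x hx; exact: ex_derive.
rewrite (@continuous_FTC2 _ f F 0 (pi *+ 2)) //.
- apply: derivable_within_continuous => x; rewrite in_itv /= => hx.
  have [hx1 hx2] := andP hx.
  have h1 : 0 < c - x by rewrite /c; lra.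
  have h2 : 0 < s + x by lra.
  apply: ex_derive.
  exact: (is_deriveZ A (is_deriveD (@is_derive_powD s (- g) x h2) (@is_derive_powB c (- g) x h1))).
- split.
  + by move=> x; rewrite in_itv /= => /andP[/ltW a /ltW b]; apply: dfd; rewrite a b.
  + apply: cvg_at_right_filter; apply: differentiable_continuous.
    by apply/derivable1_diffP; apply: dfd; rewrite lexx ltW.
  + apply: cvg_at_left_filter; apply: differentiable_continuous.
    by apply/derivable1_diffP; apply: dfd; rewrite lexx ltW.
- move=> x; rewrite in_itv /= => /andP[/ltW a /ltW b].
  have := dF x; rewrite a b => /(_ isT) H.
  by rewrite derive1E derive_val.
Qed.

Lemma int_pow_le (A s g : R) : 0 <= A -> 0 < s -> 1 < g ->
  (\int[@lebesgue_measure R]_(t in `[0%R, (pi *+ 2)%R])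
     (A * ((s + t) `^ (- g) + (s + pi *+ 2 - t) `^ (- g)))%:E <=
   (A * (2 / (g - 1) * s `^ (1 - g)))%:E)%E.
Proof.
move=> A0 s0 g1; rewrite int_pow_eq // lee_fin addrK subr0 addr0.
set a := s `^ (1 - g); set b := (s + pi *+ 2) `^ (1 - g).
have b0 : 0 <= b by apply: powR_ge0.
have k0 : 0 <= A / (g - 1) by apply: divr_ge0 => //; lra.
have -> : A * (2 / (g - 1) * a) = 2 * (A / (g - 1)) * a by ring.
set k := A / (g - 1).
have : 0 <= k * b by apply: mulr_ge0.
nra'.
Qed.
End S3.

Section S4.
Variable R : realType.


Lemma nneseries_le_bound (a : nat -> R) (M : R) : (forall n, 0 <= a n) ->
  (forall N, \sum_(1 <= n < N) a n <= M) ->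
  (\sum_(1 <= n <oo) (a n)%:E <= M%:E)%E.
Proof.
move=> a0 aM.
apply: lime_le.
  by apply: is_cvg_nneseries => n _ _; rewrite lee_fin.
by near=> N; rewrite sumEFin lee_fin.
Unshelve. all: by end_near. Qed.

Lemma nneseries_ge0' (a : nat -> R) : (forall n, 0 <= a n) ->
  (0 <= \sum_(1 <= n <oo) (a n)%:E)%E.
Proof.
move=> a0; apply: nneseries_ge0 => n _; rewrite lee_fin //.
Qed.

Lemma powRN_le (x y a : R) : 0 < x -> x <= y -> 0 <= a -> y `^ (- a) <= x `^ (- a).
Proof.
move=> x0 xy a0.
rewrite !powRN lef_pV2 ?posrE ?powR_gt0 //; last exact: lt_le_trans xy.
by apply: ge0_ler_powR => //; rewrite nnegrE ltW // (lt_le_trans x0).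
Qed.

End S4.

Section S5.
Variable R : realType.


Lemma sin_ge_xcos (x : R) : 0 <= x <= 1 -> x * cos x <= sin x.
Proof.
move=> /andP[x0 x1].
pose h : R -> R := (@sin R) - (id * (@cos R)).
have dh : forall y : R, is_derive y 1 h (y * sin y).
  move=> y.
  have H := is_deriveB (is_derive_sin y) (is_deriveM (is_derive_id y 1) (is_derive_cos y)).
  have -> : y * sin y = cos y - (y *: - sin y + cos y *: 1).
    rewrite /GRing.scale /=; ring.
  exact: H.
have hc : {within `[0, 1], continuous h}.
  by apply: derivable_within_continuous => y _; have H := dh y; exact: ex_derive.
have key : h 0 <= h x.
  apply: (@ger0_derive1_le_cc R h 0 1 _ _ hc 0 x).
  - by move=> y _; have H := dh y; exact: ex_derive.
  - move=> y; rewrite in_itv /= => /andP[y0 y1].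
    have H := dh y; rewrite derive1E derive_val mulr_ge0 ?ltW //.
    apply: sin_gt0_pi; rewrite y0 /=.
    by have := pi_ge2 R; lra.
  - by rewrite in_itv /= lexx ler01.
  - by rewrite in_itv /= x0 x1.
  - exact: x0.
move: key; rewrite /h !fctE sin0 mul0r subr0 subr_ge0 => //.
Qed.


Lemma cos_le_cos1 (x : R) : 0 <= x <= 1 -> cos 1 <= cos x.
Proof.
move=> /andP[x0 x1].
have pi2 := pi_ge2 R.
rewrite leNgt ltr_cos ?in_itv /= ?x0 ?ler01 /= -?leNgt //; lra.
Qed.

Lemma one_sub_cos_ge (t : R) : 0 <= t <= pi -> cos 1 ^+ 2 / 16 * t ^+ 2 <= 1 - cos t.
Proof.
move=> /andP[t0 tpi].
have pi2 := pi_ge2 R.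
have pi4 : pi < 4 :> R by have := pihalf_lt2 R; lra.
have c1 := cos1_gt0 R.
have c1' := cos_le1 (1 : R).
have [t2|t2] := leP t 2.
- set x := t / 2.
  have x0 : 0 <= x <= 1 by rewrite /x; apply/andP; split; lra.
  have hs := @sin_ge_xcos x x0.
  have hc := @cos_le_cos1 x x0.
  have xx : t = x *+ 2 by rewrite /x -mulr_natr; field.
  have e : 1 - cos t = 2 * sin x ^+ 2.
    by rewrite xx cos_mulr2n cos2sin2 -mulr_natr; ring.
  rewrite e.
  have hx : x * cos 1 <= sin x.
    apply: le_trans hs; apply: ler_wpM2l => //; by case/andP: x0.
  have hx0 : 0 <= x * cos 1 by apply: mulr_ge0; [case/andP: x0|lra].
  have : (x * cos 1) ^+ 2 <= sin x ^+ 2.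
    by rewrite ler_pXn2r // ?nnegrE // (le_trans hx0 hx).
  have tx : t = 2 * x by rewrite /x; field.
  rewrite tx exprMn => hh.
  have : 0 <= x ^+ 2 * cos 1 ^+ 2 by apply: mulr_ge0; apply: sqr_ge0.
  have -> : cos 1 ^+ 2 / 16 * (2 * x) ^+ 2 = (x ^+ 2 * cos 1 ^+ 2) / 4 by field.
  move: hh; set a := x ^+ 2 * cos 1 ^+ 2; set b := sin x ^+ 2 => hh ha.
  have : 0 <= b by apply: sqr_ge0.
  clearbody a b x.
  lra.
- have hc : cos t <= cos 2.
    rewrite leNgt ltr_cos ?in_itv /= -?leNgt ?tpi ?ltW //=; lra.
  have := cos2_lt0 R.
  have h1 : cos (1:R) ^+ 2 <= 1 by rewrite expr2 mulr_ile1 // ltW.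
  have h2 : t ^+ 2 <= 4 ^+ 2 by rewrite ler_pXn2r ?nnegrE //; lra.
  have : cos 1 ^+ 2 * t ^+ 2 <= 1 * 4 ^+ 2 by rewrite ler_pM ?sqr_ge0.
  have -> : cos 1 ^+ 2 / 16 * t ^+ 2 = (cos 1 ^+ 2 * t ^+ 2) / 16 by field.
  set a := cos 1 ^+ 2 * t ^+ 2; clearbody a.
  have -> : (4 : R) ^+ 2 = 16 by rewrite expr2; lra.
  lra.
Qed.

Lemma cos_2piB (t : R) : cos (pi *+ 2 - t) = cos t.
Proof. by rewrite cosB cos2pi sin2pi mul1r mul0r addr0. Qed.

Lemma U_lower (r t : R) : 0 <= r < 1 -> 0 <= t <= pi *+ 2 ->
  cos 1 / 10 * (1 - r + Num.min t (pi *+ 2 - t)) <=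
  Num.sqrt ((1 - r * cos t) ^+ 2 + (r * sin t) ^+ 2).
Proof.
move=> /andP[r0 r1] /andP[t0 t2].
have pi2 := pi_ge2 R.
have pi4 : pi < 4 :> R by have := pihalf_lt2 R; lra.
have c1 := cos1_gt0 R.
have c1' : cos (1:R) ^+ 2 <= 1 by rewrite expr2 mulr_ile1 // ?ltW // cos_le1.
set m := Num.min t (pi *+ 2 - t).
have hm : 0 <= m <= pi /\ cos m = cos t.
  rewrite /m; have [tl|tl] := leP t (pi *+ 2 - t).
  - split => //; apply/andP; split => //; move: tl; rewrite -mulr_natr; lra.
  - split; last exact: cos_2piB.
    apply/andP; split; move: tl t2; rewrite -mulr_natr; lra.
case: hm => hm cm.
have hk := @one_sub_cos_ge m hm; rewrite cm in hk.
have -> : (1 - r * cos t) ^+ 2 + (r * sin t) ^+ 2 = (1 - r) ^+ 2 + 2 * r * (1 - cos t).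
  by rewrite exprMn sin2cos2; ring.
have hge : 0 <= cos 1 / 10 * (1 - r + m).
  apply: mulr_ge0; first lra.
  by case/andP: hm => m0 _; lra.
rewrite -(ger0_norm hge) -sqrtr_sqr ler_sqrt; last first.
  have : 0 <= 1 - cos t by have := cos_le1 t; lra.
  by move=> h; apply: addr_ge0; [apply: sqr_ge0|apply: mulr_ge0 => //; lra].
case/andP: hm => m0 mpi.
set k := 1 - cos t in hk *.
set C := cos (1:R) ^+ 2 in c1' hk *.
have -> : (cos 1 / 10 * (1 - r + m)) ^+ 2 = C / 100 * (1 - r + m) ^+ 2.
  by rewrite /C; field.
have C0 : 0 <= C by rewrite /C sqr_ge0.
clearbody C k m.
have k0 : 0 <= k by apply: le_trans hk; apply: mulr_ge0; [lra|apply: sqr_ge0].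
have [rh|rh] := leP (1/2) r.
- have hk2 : C / 16 * m ^+ 2 <= 2 * r * k.
    apply: (le_trans hk).
    nra.
  have : (1 - r + m) ^+ 2 <= 2 * ((1 - r) ^+ 2 + m ^+ 2).
    have := sqr_ge0 (1 - r - m); nra.
  have : C * (1 - r) ^+ 2 <= (1 - r) ^+ 2.
    by rewrite ler_piMl // ?sqr_ge0.
  have : 0 <= C * m ^+ 2 by rewrite mulr_ge0 ?sqr_ge0.
  nra.
- have : (1 - r + m) ^+ 2 <= 5 ^+ 2 by rewrite ler_pXn2r ?nnegrE //; lra.
  have : (1 - r) ^+ 2 >= (1/2) ^+ 2 by rewrite ler_pXn2r ?nnegrE //; lra.
  have : 0 <= 2 * r * k by nra.
  nra.
Qed.
End S5.

Section S6.
Variable R : realType.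





Lemma powR_invK (K a : R) : 0 < K -> K^-1 `^ a = K `^ (- a).
Proof. move=> K0. rewrite -(powR_inv1 (ltW K0)) -powRrM mulN1r //. Qed.

Section geom.
Variables (K u nu beta : R).
Hypotheses (K1 : 1 < K) (u0 : 0 < u) (nu0 : 0 < nu) (b0 : beta <= 0)
  (lam0 : 0 < - (nu + beta)).

Let lam := - (nu + beta).
Definition Tg (d : R) := d `^ nu * (Num.max d u) `^ beta.
Let q := K `^ (- nu).
Let E := (1 - q)^-1.
Let Kl := K `^ lam.
Let D := (Kl - 1)^-1.
Definition Cg := 1 + D + E.
Let B (d : R) := if d <= u then E * (d `^ nu * u `^ beta)
  else Cg * u `^ (- lam) - D * d `^ (- lam).

Let K0 : 0 < K. Proof. exact: lt_trans ltr01 K1. Qed.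
Let Kv0 : 0 < K^-1. Proof. by rewrite invr_gt0. Qed.

Let Kgt1 a : 0 < a -> 1 < K `^ a.
Proof.
move=> a0; have := @gt0_ltr_powR R a a0 1 K.
rewrite powR1; apply => //; rewrite nnegrE ?ler01 // ltW //.
Qed.

Let q01 : 0 < q < 1.
Proof.
rewrite /q powRN invr_gt0 powR_gt0 //= invf_lt1 ?powR_gt0 //.
exact: Kgt1.
Qed.

Let E0 : 0 < E.
Proof. by rewrite /E invr_gt0; case/andP: q01 => _; lra'. Qed.

Let Eq : 1 + E * q = E.
Proof.
rewrite /E; have : 1 - q != 0 by case/andP: q01 => _ ?; rewrite subr_eq0 gt_eqF.
by move=> h; field.
Qed.

Let Kl1 : 1 < Kl. Proof. exact: Kgt1. Qed.

Let D0 : 0 < D.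
Proof. by rewrite /D invr_gt0; have := Kl1; lra'. Qed.

Let DKl : 1 + D = D * Kl.
Proof.
rewrite /D; have : Kl - 1 != 0 by rewrite subr_eq0 gt_eqF.
by move=> h; field.
Qed.

Let P1 d : 0 < d -> (d * K^-1) `^ nu = d `^ nu * q.
Proof.
by move=> d0; rewrite powRM ?invr_ge0 ?ltW // /q (@powR_invK K nu K0).
Qed.

Let P2 d : 0 < d -> (d * K^-1) `^ (- lam) = d `^ (- lam) * Kl.
Proof.
by move=> d0; rewrite powRM ?invr_ge0 ?ltW // /Kl (@powR_invK K (- lam) K0) opprK.
Qed.

Let P3 d : 0 < d -> d `^ nu * d `^ beta = d `^ (- lam).
Proof.
move=> d0; rewrite -powRD; last by rewrite (gt_eqF d0) implybT.
by congr (_ `^ _); rewrite /lam opprK.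
Qed.

Lemma geom_ind N : forall d, 0 < d -> \sum_(k < N) Tg (d * K^-1 ^+ k) <= B d.
Proof.
have D0' := D0; have E0' := E0.
elim: N => [|N IH] d d0.
  rewrite big_ord0 /B; case: ifPn => du.
    by rewrite mulr_ge0 ?mulr_ge0 ?powR_ge0 ?ltW.
  have {}du : u < d by rewrite ltNge.
  rewrite subr_ge0.
  apply: (@le_trans _ _ (Cg * d `^ (- lam))).
    by rewrite ler_wpM2r ?powR_ge0 // /Cg; lra'.
  by rewrite ler_wpM2l ?powRN_le ?ltW // /Cg; lra'.
rewrite big_ord_recl /= expr0 mulr1.
have d'0 : 0 < d * K^-1 by rewrite mulr_gt0.
under eq_bigr do rewrite exprS mulrA.
have := IH _ d'0 => {}IH.
have dd' : d * K^-1 < d by rewrite gtr_pMr // invf_lt1.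
rewrite /B.
case: ifPn => du.
  have d'u : d * K^-1 <= u by rewrite ltW // (lt_le_trans dd').
  move: IH; rewrite /B d'u P1 // => IH.
  rewrite {1}/Tg max_r //.
  apply: (le_trans (lerD (lexx _) IH)).
  rewrite -[X in _ <= X * _]Eq; set w := d `^ nu * u `^ beta.
  have -> : E * (d `^ nu * q * u `^ beta) = E * q * w by rewrite /w; ring.
  by rewrite mulrDl mul1r.
have {}du : u < d by rewrite ltNge.
rewrite {1}/Tg (max_l (ltW du)) P3 //.
move: IH; rewrite /B; case: ifPn => d'u.
  rewrite P1 // => IH.
  apply: (le_trans (lerD (lexx _) IH)).
  have h1 : E * (d `^ nu * q * u `^ beta) <= E * u `^ (- lam).
    apply: ler_wpM2l; first exact: ltW.
    rewrite -(P3 u u0); apply: ler_wpM2r; first exact: powR_ge0.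
    rewrite -P1 //; apply: ge0_ler_powR; rewrite ?nnegrE; [exact: ltW|exact: ltW|exact: ltW|done].
  have h2 : d `^ (- lam) <= u `^ (- lam) by rewrite powRN_le ?ltW.
  move: h1 h2; rewrite /Cg.
  set a := E * _; set x := d `^ _; set y := u `^ _ => h1 h2.
  have : 0 <= D by exact: ltW.
  have : D * x <= D * y by rewrite ler_wpM2l // ltW.
  nra'.
rewrite P2 // => IH.
apply: (le_trans (lerD (lexx _) IH)).
have -> : d `^ (- lam) + (Cg * u `^ (- lam) - D * (d `^ (- lam) * Kl)) =
  Cg * u `^ (- lam) - D * d `^ (- lam) + d `^ (- lam) * (1 + D - D * Kl) by ring.
by rewrite DKl subrr mulr0 addr0.
Qed.

Lemma geom_final N : \sum_(1 <= n < N) Tg (K ^- n) <= Cg * u `^ (- lam).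
Proof.
have D0' := D0; have E0' := E0.
case: N => [|N]; first by rewrite big_geq // mulr_ge0 ?powR_ge0 // /Cg; lra'.
rewrite big_add1 /= big_mkord.
under eq_bigr do rewrite -exprVn exprS.
apply: (le_trans (@geom_ind N (K^-1) Kv0)).
rewrite /B; case: ifPn => du.
  apply: (@le_trans _ _ (E * u `^ (- lam))).
    apply: ler_wpM2l; first exact: ltW.
    rewrite -(P3 u u0); apply: ler_wpM2r; first exact: powR_ge0.
    apply: ge0_ler_powR; rewrite ?nnegrE; [exact: ltW|exact: ltW|exact: ltW|done].
  by rewrite ler_wpM2r ?powR_ge0 // /Cg; lra'.
by rewrite gerBl mulr_ge0 ?powR_ge0 ?ltW.
Qed.

End geom.
End S6.

Section M.
Variable R : realType.

Lemma U_pos (r t : R) : 0 <= r < 1 ->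
  0 < Num.sqrt ((1 - r * cos t) ^+ 2 + (r * sin t) ^+ 2).
Proof.
move=> /andP[r0 r1].
rewrite sqrtr_gt0.
have h : 0 < 1 - r * cos t.
  have := cos_le1 t; have := cos_geN1 t => c1 c2.
  have : r * cos t <= r by rewrite ler_piMr.
  lra.
have : 0 < (1 - r * cos t) ^+ 2 by rewrite exprn_gt0.
have := sqr_ge0 (r * sin t); lra.
Qed.

Lemma Fsum_bound (K nu beta r t : R) : 1 < K -> 0 < nu -> beta <= 0 ->
  0 < - (nu + beta) -> 0 <= r < 1 ->
  (Fsum K nu beta (polar r t) <=
   (Cg R K nu beta * (Num.sqrt ((1 - r * cos t) ^+ 2 + (r * sin t) ^+ 2)) `^ (- - (nu + beta)))%:E)%E.
Proof.
move=> K1 nu0 b0 lam0 hr.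
have U0 := @U_pos r t hr.
set U := Num.sqrt _ in U0 *.
case/andP: hr => r0 r1.
rewrite /Fsum; apply: nneseries_le_bound.
  by move=> n; rewrite /cabs sqrtr_ge0.
move=> N; apply: le_trans (@geom_final R K U nu beta K1 U0 nu0 lam0 N).
apply: ler_sum => n _.
rewrite cabs_fn /Tg /delta.
have d0 : 0 < K ^- n by rewrite invr_gt0 exprn_gt0 //; lra'.
apply: ler_wpM2l; first exact: powR_ge0.
have M0 : 0 < Num.max (K ^- n) U by rewrite lt_max d0.
rewrite /powR (gt_eqF M0) ler_expR.
apply: ler_wnM2l => //.
set Q := (1 + K ^- n - r * cos t) ^+ 2 + (r * sin t) ^+ 2.
have hc : r * cos t <= r by rewrite ler_piMr // cos_le1.
have hQ1 : (K ^- n) ^+ 2 <= Q.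
  rewrite /Q; have := sqr_ge0 (r * sin t).
  have : (K ^- n) ^+ 2 <= (1 + K ^- n - r * cos t) ^+ 2.
    by rewrite ler_pXn2r ?nnegrE //; lra'.
  lra'.
have hQ2 : (1 - r * cos t) ^+ 2 + (r * sin t) ^+ 2 <= Q.
  by rewrite /Q lerD2r ler_pXn2r ?nnegrE //; lra'.
have Q0 : 0 <= Q by apply: le_trans hQ1; apply: sqr_ge0.
have MQ : Num.max (K ^- n) U <= Num.sqrt Q.
  rewrite ge_max; apply/andP; split.
    by rewrite -(ger0_norm (ltW d0)) -sqrtr_sqr ler_sqrt.
  by rewrite /U ler_sqrt.
rewrite ler_ln ?posrE //.
exact: lt_le_trans MQ.
Qed.

End M.

Theorem lemma6p6 (R : realType) (p alpha beta : R) :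
  0 < p -> 0 < alpha -> beta * p < -1 -> 0 < - (alpha + beta + p^-1) ->
  exists K0 : R, 1 < K0 /\
    forall K : R, K0 < K ->
      exists C : R, forall r : R, 0 <= r -> r < 1 ->
        (((1 - r) `^ alpha)%:E
           * Mp p r (Fsum K (- (alpha + beta + p^-1)) beta) <= C%:E)%E.
Proof.
move=> p0 a0 bp hnu.
set nu := - (alpha + beta + p^-1) in hnu *.
have b0 : beta < 0.
  rewrite ltNge; apply/negP => hb.
  have : 0 <= beta * p by rewrite mulr_ge0 // ltW.
  lra.
have pinv0 : 0 < p^-1 by rewrite invr_gt0.
have lam_eq : - (nu + beta) = alpha + p^-1 by rewrite /nu; ring.
have lam0 : 0 < - (nu + beta) by rewrite lam_eq; lra.
exists 2; split; first lra.
move=> K K2; have K1 : 1 < K by lra.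
set Cgeo := Cg R K nu beta.
have Cgeo0 : 0 <= Cgeo.
  have := @geom_final R K 1 nu beta K1 ltr01 hnu lam0 0%N.
  by rewrite big_geq // powR1 mulr1.
set g := (alpha + p^-1) * p.
have g_eq : g = alpha * p + 1 by rewrite /g mulrDl mulVf ?gt_eqF.
have g1 : 1 < g by rewrite g_eq; have := mulr_gt0 a0 p0; lra.
set c1 := cos (1:R) / 10.
have c10 : 0 < c1 by rewrite /c1 divr_gt0 // cos1_gt0.
set A1 := Cgeo `^ p * c1 `^ (- g).
have A10 : 0 <= A1 by rewrite mulr_ge0 ?powR_ge0.
have pi2 : 0 < pi *+ 2 :> R by rewrite mulrn_wgt0 // pi_gt0.
set X := (pi *+ 2)^-1 * (A1 * (2 / (g - 1))).
have X0 : 0 <= X.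
  rewrite /X; apply: mulr_ge0; first by rewrite invr_ge0 ltW.
  apply: mulr_ge0 => //; apply: divr_ge0; lra.
exists (X `^ p^-1).
move=> r r0 r1.
set s := 1 - r.
have s0 : 0 < s by rewrite /s; lra.
have hr : 0 <= r < 1 by rewrite r0 r1.
have hpt : forall t, 0 <= t <= pi *+ 2 ->
  (poweR (Fsum K nu beta (polar r t)) p <=
   (A1 * ((s + t) `^ (- g) + (s + pi *+ 2 - t) `^ (- g)))%:E)%E.
  move=> t ht.
  have U0 := @U_pos R r t hr.
  set U := Num.sqrt _ in U0 *.
  have hF := @Fsum_bound R K nu beta r t K1 hnu (ltW b0) lam0 hr.
  rewrite -/U lam_eq in hF.
  apply: (le_trans (gt0_ler_poweR (ltW p0) _ _ hF)).
  - rewrite in_itv /= leey andbT.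
    by apply: nneseries_ge0 => n _; rewrite lee_fin /cabs sqrtr_ge0.
  - by rewrite in_itv /= leey andbT lee_fin mulr_ge0 ?powR_ge0.
  rewrite poweR_EFin lee_fin.
  rewrite powRM ?powR_ge0 // -powRrM.
  have -> : - (alpha + p^-1) * p = - g by rewrite /g mulNr.
  rewrite /A1 -mulrA; apply: ler_wpM2l; first exact: powR_ge0.
  have hU := @U_lower R r t hr ht.
  rewrite -/U -/c1 in hU.
  set m := Num.min t (pi *+ 2 - t) in hU *.
  have hm : 0 <= m.
    rewrite /m le_min; case/andP: ht => t0 t2; rewrite t0 /=; lra.
  have hsm : 0 < c1 * (1 - r + m) by rewrite mulr_gt0 //; lra.
  apply: (le_trans (@powRN_le R _ _ g hsm hU (ltW (lt_trans ltr01 g1)))).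
  rewrite powRM; [|exact: ltW|lra].
  apply: ler_wpM2l; first exact: powR_ge0.
  rewrite /m; case: (leP t (pi *+ 2 - t)) => h.
  - by rewrite -/s lerDl powR_ge0.
  - by rewrite -/s addrA lerDr powR_ge0.
have hint : (\int[@lebesgue_measure R]_(t in `[0%R, (pi *+ 2)%R])
     poweR (Fsum K nu beta (polar r t)) p <=
     (A1 * (2 / (g - 1) * s `^ (1 - g)))%:E)%E.
  apply: le_trans (@int_pow_le R A1 s g A10 s0 g1).
  apply: my_le_integral => t ht; first exact: poweR_ge0.
  by apply: hpt; move: ht; rewrite /= in_itv /=.
rewrite /Mp.
set I := (\int[@lebesgue_measure R]_(t in _) _)%E.
have I0 : (0 <= I)%E by apply: integral_ge0 => t _; exact: poweR_ge0.
have h2 : ((pi *+ 2)^-1%:E * I <= (X * s `^ (1 - g))%:E)%E.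
  apply: (le_trans (lee_wpmul2l _ hint)); first by rewrite lee_fin invr_ge0 ltW.
  rewrite -EFinM lee_fin /X.
  by rewrite le_eqVlt; apply/orP; left; apply/eqP; ring.
have h3 : (((pi *+ 2)^-1%:E * I) `^ p^-1 <= ((X * s `^ (1 - g)) `^ p^-1)%:E)%E.
  rewrite -poweR_EFin; apply: gt0_ler_poweR => //.
  - exact: ltW.
  - by rewrite in_itv /= leey andbT mule_ge0 // lee_fin invr_ge0 ltW.
  - by rewrite in_itv /= leey andbT lee_fin mulr_ge0 ?powR_ge0.
apply: (le_trans (lee_wpmul2l _ h3)); first by rewrite lee_fin powR_ge0.
rewrite -EFinM lee_fin.
rewrite powRM ?powR_ge0 // -powRrM.
have -> : (1 - g) * p^-1 = - alpha.
  by rewrite g_eq; field; rewrite gt_eqF.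
rewrite mulrCA powRN mulfV ?mulr1 //.
by rewrite gt_eqF // powR_gt0.
Qed.
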